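(* Let $T$ be a monoid and $Y$ a semilattice, and let $\cdot$ be a left partial action of $T$ on $Y$ satisfying axioms (A), (B), (C), with corresponding map $\varphi\colon T\to\mathcal{I}(Y)$, $t\mapsto\varphi_t$. The following are equivalent: (1) $M(T,Y)$ is an $F$-restriction monoid; (2) $\mathrm{dom}(\varphi_t)$ is a principal order ideal of $Y$ for every $t\in T$; (3) the image of $\varphi$ is contained in the Munn semigroup $T_Y$ of $Y$.
   Context: A left partial action of $T$ on $Y$ is a partial map $(t,y)\mapsto t\cdot y$ with $1\cdot y=y$ always defined and such that if $t\cdot y$ and $s\cdot(t\cdot y)$ are defined then $(st)\cdot y$ is defined and equals $s\cdot(t\cdot y)$. $\varphi_t$ is the partial injection $y\mapsto t\cdot y$; $\mathcal{I}(Y)$ is the monoid of partial injections of $Y$. Axioms: (A) $\mathrm{dom}\varphi_t$, $\mathrm{ran}\varphi_t$ are order ideals of $Y$; (B) $\varphi_t$ is an order-isomorphism from $\mathrm{dom}\varphi_t$ onto $\mathrm{ran}\varphi_t$; (C) $\mathrm{dom}\varphi_t\neq\varnothing$. Reverse right partial action: $y\circ t$ is defined iff $y\in\mathrm{ran}\varphi_t$, with $y\circ t=\varphi_t^{-1}(y)$. $M(T,Y)=\{(y,t)\in Y\times T\colon y\circ t\text{ defined}\}$ with $(x,s)(y,t)=(s\cdot((x\circ s)\wedge y),st)$, $(y,t)^*=(y\circ t,1)$, $(y,t)^+=(y,1)$; it is a restriction semigroup with projections $\{(y,1)\}$. A restriction semigroup is $F$-restriction if each class of the least congruence $\sigma$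 identifying all projections has a maximum element in the natural order ($a\le b$ iff $a=eb$ for a projection $e$). The Munn semigroup $T_Y$ is the inverse semigroup of all order-isomorphisms between principal order ideals of $Y$. *)

(* Defs.v *)
From HB Require Import structures.
From mathcomp Require Import all_boot all_order.
From Stdlib Require Import ClassicalEpsilon.
Set Implicit Arguments. Unset Strict Implicit. Unset Printing Implicit Defensive.
Import Order.Theory.
Local Open Scope order_scope.

Definition is_monoid (T : Type) (mul : T -> T -> T) (one : T) : Prop :=
  [/\ forall a b c, mul a (mul b c) = mul (mul a b) c,
      forall a, mul one a = a & forall a, mul a one = a].

(* Partial actions of T on a meet semilattice Y, encoded as
   act t y = Some (t . y) when t . y is defined, None otherwise.
   phi_t is the partial injection  y |-> act t y.                      *)
Section PartialAction.
Context {d : Order.disp_t} {Y : meetSemilatticeType d} {T : Type}.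
Variables (mul : T -> T -> T) (one : T) (act : T -> Y -> option Y).

Definition in_dom (t : T) (y : Y) : Prop := exists z, act t y = Some z.
Definition in_ran (t : T) (y : Y) : Prop := exists x, act t x = Some y.

Definition left_partial_action : Prop :=
  (forall y, act one y = Some y) /\
  (forall s t y z w, act t y = Some z -> act s z = Some w ->
                     act (mul s t) y = Some w).

Definition order_ideal (P : Y -> Prop) : Prop :=
  forall x y, P y -> x <= y -> P x.

Definition axiomA : Prop :=
  forall t, order_ideal (in_dom t) /\ order_ideal (in_ran t).
(* (B) : phi_t is an order isomorphism dom phi_t -> ran phi_t
   (it is onto ran phi_t by definition of ran) *)
Definition order_iso_on (t : T) : Prop :=
  forall x y x' y', act t x = Some x' -> act t y = Some y' ->
                    (x <= y) = (x' <= y').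
Definition axiomB : Prop := forall t, order_iso_on t.
Definition axiomC : Prop := forall t, exists y, in_dom t y.

Definition principal_ideal (P : Y -> Prop) : Prop :=
  exists e : Y, forall y, P y <-> y <= e.

Definition in_Munn (t : T) : Prop :=
  principal_ideal (in_dom t) /\ principal_ideal (in_ran t) /\ order_iso_on t.

(* reverse right partial action: y o t = phi_t^{-1}(y) (meaningful when
   y \in ran phi_t; an arbitrary value otherwise) *)
Definition ract (y : Y) (t : T) : Y :=
  epsilon (inhabits y) (fun x => act t x = Some y).

Definition inM (a : Y * T) : Prop := in_ran a.2 a.1.

(* (x,s)(y,t) = (s . ((x o s) /\ y), st); the default value is never used
   on elements of M(T,Y) *)
Definition mulM (a b : Y * T) : Y * T :=
  (odflt b.1 (act a.2 (ract a.1 a.2 `&` b.1)), mul a.2 b.2).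

Definition projM (a : Y * T) : Prop := a.2 = one.

End PartialAction.

(* Generic notions for a semigroup S given as a subset inS of a type,
   with multiplication mul and set of projections proj.               *)
Section Restriction.
Variables (S : Type) (inS : S -> Prop) (mul : S -> S -> S) (proj : S -> Prop).

Definition nat_le (a b : S) : Prop := exists2 e, proj e & a = mul e b.

Definition congruence (R : S -> S -> Prop) : Prop :=
  [/\ forall a, inS a -> R a a,
      forall a b, R a b -> R b a,
      forall a b c, R a b -> R b c -> R a c &
      forall a b c, inS a -> inS b -> inS c -> R a b ->
        R (mul c a) (mul c b) /\ R (mul a c) (mul b c)].

Definition sigma (a b : S) : Prop :=
  inS a /\ inS b /\
  forall R, congruence R -> (forall e f, proj e -> proj f -> R e f) -> R a b.

Definition F_restriction : Prop :=
  forall a, inS a -> exists m, [/\ inS m, sigma a m &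
                                 forall b, sigma a b -> nat_le b m].

Definition has_identity : Prop :=
  exists2 u, inS u & forall a, inS a -> mul u a = a /\ mul a u = a.

Definition F_restriction_monoid : Prop := has_identity /\ F_restriction.

End Restriction.

(* Main.v *)
Require Import Defs.
From mathcomp Require Import all_boot all_order.
From Stdlib Require Import ClassicalEpsilon.
Import Order.Theory.
Local Open Scope order_scope.
Set Implicit Arguments. Unset Strict Implicit.

Lemma ractP d (Y : meetSemilatticeType d) (T : Type) (act : T -> Y -> option Y) t y :
  in_ran act t y -> act t (ract act y t) = Some y.
Proof. by move=> H; rewrite /ract; apply: (epsilon_spec (inhabits y) (fun x => act t x = Some y)). Qed.

Lemma ract_one d (Y : meetSemilatticeType d) (T : Type) (mul : T -> T -> T) one
  (act : T -> Y -> option Y) y :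
  left_partial_action mul one act -> ract act y one = y.
Proof.
move=> [H1 _]; have := @ractP d Y T act one y; rewrite H1.
by move=> H; case: (H (ex_intro _ y (H1 y))).
Qed.

Lemma mulM_closed d (Y : meetSemilatticeType d) (T : Type) (mul : T -> T -> T) one
  (act : T -> Y -> option Y) a b :
  left_partial_action mul one act -> axiomA act ->
  inM act a -> inM act b -> inM act (mulM mul act a b).
Proof.
move=> [_ Hc] HA; case: a => x s; case: b => y t; rewrite /inM /= => Ha Hb.
have Hu := ractP Ha.
have [z Hz] : in_dom act s (ract act x s `&` y).
  by apply: (proj1 (HA s) _ (ract act x s)); [exists x | exact: leIl].
rewrite Hz /=.
have [w Hw] : in_ran act t (ract act x s `&` y).
  by apply: (proj2 (HA t) _ y) => //; exact: leIr.
by exists w; exact: Hc Hw Hz.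
Qed.

Lemma inM_proj d (Y : meetSemilatticeType d) (T : Type) (mul : T -> T -> T) one
  (act : T -> Y -> option Y) y :
  left_partial_action mul one act -> inM act (y, one).
Proof. by move=> [H1 _]; exists y; rewrite H1. Qed.

Lemma sigmaP d (Y : meetSemilatticeType d) (T : Type) (mul : T -> T -> T) one
  (act : T -> Y -> option Y) a b :
  is_monoid mul one -> left_partial_action mul one act -> axiomA act ->
  sigma (inM act) (mulM mul act) (projM one) a b <->
  [/\ inM act a, inM act b & a.2 = b.2].
Proof.
move=> [_ _ m1] Hl HA; split.
  move=> [Ha [Hb H]]; split => //.
  have := H (fun a b => [/\ inM act a, inM act b & a.2 = b.2]).
  case => //.
    split.
    - by move=> c Hc; split.
    - by move=> c e [? ? ?]; split.
    - by move=> c e f [? ? ->] [? ? ?]; split.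
    - move=> c e f Hc He Hf [_ _ E]; split; split => //=;
        try (by apply: (mulM_closed Hl HA)); by rewrite /= E.
  by case=> y s; case=> z t; rewrite /projM /= => -> ->; split => //; apply: inM_proj Hl.
move=> [Ha Hb E]; split => //; split => // R [Rr Rs Rt Rc] Rp.
case: a Ha E => x s; case: b Hb => y t /= Hb Ha E; subst t.
have Hex := inM_proj (ract act x s) Hl.
have Hey := inM_proj (ract act y s) Hl.
have Hrex : R (ract act x s, one) (ract act y s, one) by apply: Rp.
have [H1 _] := Rc _ _ _ Hex Hey Ha Hrex.
have [H2 _] := Rc _ _ _ Hey Hex Hb (Rs _ _ Hrex).
move: H1 H2; rewrite /mulM /= m1 !meetxx (ractP (Ha : in_ran act s x)) (ractP (Hb : in_ran act s y)) /= [ract act y s `&` _]meetC.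
have [z Hz] : in_dom act s (ract act x s `&` ract act y s).
  apply: (proj1 (HA s) _ (ract act x s)); last exact: leIl.
  by exists x; apply: ractP.
rewrite Hz /=; move=> H1 H2; exact: Rt H1 (Rs _ _ H2).
Qed.

Lemma natleP d (Y : meetSemilatticeType d) (T : Type) (mul : T -> T -> T) one
  (act : T -> Y -> option Y) a b :
  is_monoid mul one -> left_partial_action mul one act ->
  nat_le (mulM mul act) (projM one) a b <-> (a.2 = b.2 /\ a.1 <= b.1).
Proof.
move=> [_ mo _] Hl; have [H1 _] := Hl; split.
  case=> [[f o]] /= Ho ->; rewrite /projM /= in Ho; subst o.
  by rewrite /mulM /= (ract_one _ Hl) H1 /= mo; split => //; exact: leIr.
case=> E L; exists (a.1, one) => //.
case: a E L => x s; case: b => y t /= -> L.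
by rewrite /mulM /= (ract_one _ Hl) H1 /= mo meet_l.
Qed.

Lemma dom_ran d (Y : meetSemilatticeType d) (T : Type)
  (act : T -> Y -> option Y) t :
  axiomA act -> axiomB act ->
  principal_ideal (in_dom act t) <-> principal_ideal (in_ran act t).
Proof.
move=> HA HB; split.
  case=> e He; have [r Hr] : in_dom act t e by apply/He.
  exists r => y; split.
    case=> x Hx; have Hd : in_dom act t x by exists y.
    by rewrite -(HB t _ _ _ _ Hx Hr); apply/He.
  by move=> L; apply: (proj2 (HA t) _ r) => //; exists e.
case=> r Hr; have [e He] : in_ran act t r by apply/Hr.
exists e => y; split.
  case=> z Hz; have Hd : in_ran act t z by exists y.
  by rewrite (HB t _ _ _ _ Hz He); apply/Hr.
by move=> L; apply: (proj1 (HA t) _ e) => //; exists r.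
Qed.

Theorem lemma3p5 (d : Order.disp_t) (Y : meetSemilatticeType d) (T : Type)
  (mul : T -> T -> T) (one : T) (act : T -> Y -> option Y) :
  is_monoid mul one ->
  left_partial_action mul one act ->
  axiomA act -> axiomB act -> axiomC act ->
  [/\ (F_restriction_monoid (inM act) (mulM mul act) (projM one)
         <-> forall t, principal_ideal (in_dom act t)),
      ((forall t, principal_ideal (in_dom act t)) <-> forall t, in_Munn act t) &
      (F_restriction_monoid (inM act) (mulM mul act) (projM one)
         <-> forall t, in_Munn act t)].
Proof.
move=> Hm Hl HA HB HC.
have E23 : (forall t, principal_ideal (in_dom act t)) <-> forall t, in_Munn act t.
  split; last by move=> H t; case: (H t).
  move=> H t; split => //; split => //; exact/(dom_ran t HA HB).
have E12 : F_restriction_monoid (inM act) (mulM mul act) (projM one)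
         <-> forall t, principal_ideal (in_dom act t).
  split.
    case=> _ HF t; apply/(dom_ran t HA HB).
    have [y [z Hz]] := HC t.
    have Ha : inM act (z, t) by exists y.
    have [m [Hm' /(sigmaP _ _ Hm Hl HA) [_ _ /= Et] Hmax]] := HF _ Ha.
    exists m.1 => y'; split.
      move=> Hy'; have Hb : inM act (y', t) by [].
      have /(natleP _ _ Hm Hl) [_ //] := Hmax (y', t) (proj2 (sigmaP _ _ Hm Hl HA) (And3 Ha Hb erefl)).
    by move=> L; apply: (proj2 (HA t) _ m.1) => //; have Et2 : t = m.2 := Et; rewrite Et2.
  move=> H; split.
    have [e He] := H one.
    have Htop : forall y, y <= e by move=> y; apply/He; exists y; case: Hl => ->.
    exists (e, one); first exact: inM_proj Hl.
    case=> y t Hy; case: Hm => _ m1 m2; rewrite /mulM /= (ract_one _ Hl) m1 m2.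
    by rewrite meet_r // (proj1 Hl) /= meet_l // (ractP (Hy : in_ran act t y)).
  move=> a Ha; have /(dom_ran a.2 HA HB) [r Hr] := H a.2.
  exists (r, a.2); split.
  - by apply/Hr.
  - by apply/(sigmaP _ _ Hm Hl HA); split => //; apply/Hr.
  - move=> b /(sigmaP _ _ Hm Hl HA) [_ Hb Eb]; apply/(natleP _ _ Hm Hl) => /=.
    by split; [rewrite Eb | apply/Hr; rewrite Eb].
split => //; split => H.
- by apply/E23/E12.
- by apply/E12/E23.
Qed.
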